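(* Let $S$ be a countable set (with its power set as $\sigma$-field) on which $G$ acts measurably. Then $G$ acts properly on $S$ if and only if $0<\lambda(G_{s,s})<\infty$ for all $s\in S$. In this case $$\Delta^*(s)=\frac{\lambda(G_{s,s})}{\lambda(G_{\beta(s),\beta(s)})}=\frac{|G_{s,s}\beta(s)|}{|G_{\beta(s),\beta(s)}s|},\qquad s\in S,$$ and either all orbits are infinite or all orbits are finite.
   Context: $G$ is a locally compact second countable Hausdorff group with left Haar measure $\lambda$ and modular function $\Delta$ ($\int f(gh)\lambda(dg)=\Delta(h^{-1})\int f\,d\lambda$). $G_{s,t}=\{g:gs=t\}$. Proper action: with $\mu_s$ the image of $\lambda$ under $g\mapsto gs$, there is a partition $B_1,B_2,\dots$ of $S$ with $\mu_s(B_n)<\infty$ for all $s,n$. $O$ is a system of representatives of the orbits, $\beta(s)\in O$ the representative of $Gs$, and $\Delta^*(s):=\Delta(g^{-1})$ for any $g$ with $g\beta(s)=s$ (well defined under properness). $|A|$ is cardinality and $G_{s,s}t=\{gt:g\in G_{s,s}\}$. *)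

(* Defs.v *)
From HB Require Import structures.
From mathcomp Require Import all_boot all_order all_algebra.
From mathcomp Require Import finmap.
From mathcomp Require Import all_classical all_reals all_analysis.
From mathcomp Require Import lebesgue_measure measurable_realfun lebesgue_integral.
Set Implicit Arguments. Unset Strict Implicit. Unset Printing Implicit Defensive.
Import Order.TTheory GRing.Theory Num.Theory.
Local Open Scope classical_set_scope.
Local Open Scope ring_scope.

(* A type carrying both a topology and a sigma-algebra (the Borel condition
   linking them is imposed separately by [is_borel]). *)
#[short(type="topMeasurableType")]
HB.structure Definition TopMeasurable d :=
  {T of Measurable d T & Topological T}.

Definition is_borel d (G : topMeasurableType d) : Prop :=
  (@measurable d G) = smallest (sigma_algebra [set: G]) open.

Definition is_lcsc_group d (G : topMeasurableType d)
    (mul : G -> G -> G) (inv : G -> G) (one : G) : Prop :=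
  (forall x y z, mul x (mul y z) = mul (mul x y) z) /\
  (forall x, mul one x = x /\ mul x one = x) /\
  (forall x, mul (inv x) x = one /\ mul x (inv x) = one) /\
  continuous (fun p : G * G => mul p.1 p.2) /\
  continuous inv /\
  hausdorff_space G /\
  locally_compact [set: G] /\
  @second_countable G.

Definition is_left_Haar d (G : topMeasurableType d) (R : realType)
    (mul : G -> G -> G) (lam : {measure set G -> \bar R}) : Prop :=
  [/\ (forall g (A : set G), measurable A -> lam [set mul g x | x in A] = lam A),
      (forall K : set G, compact K -> (lam K < +oo)%E) &
      (forall U : set G, open U -> U !=set0 -> (0 < lam U)%E)].

Definition is_modular_function d (G : topMeasurableType d) (R : realType)
    (mul : G -> G -> G) (inv : G -> G) (lam : {measure set G -> \bar R})
    (Delta : G -> R) : Prop :=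
  forall (h : G) (f : G -> \bar R), measurable_fun [set: G] f ->
    (forall x, (0 <= f x)%E) ->
    (\int[lam]_x f (mul x h) = (Delta (inv h))%:E * \int[lam]_x f x)%E.

Definition is_action (G S : Type) (mul : G -> G -> G) (one : G)
    (act : G -> S -> S) : Prop :=
  (forall s, act one s = s) /\
  (forall g h s, act (mul g h) s = act g (act h s)).

Definition prod_powerset_measurable d (G : topMeasurableType d) (S : Type)
    (C : set (G * S)) : Prop :=
  smallest (sigma_algebra [set: G * S])
    [set A `*` B | A in [set A : set G | measurable A] & B in [set: set S]] C.

Definition measurable_action d (G : topMeasurableType d) (S : Type)
    (act : G -> S -> S) : Prop :=
  forall B : set S, prod_powerset_measurable [set p : G * S | B (act p.1 p.2)].

Definition Gst (G S : Type) (act : G -> S -> S) (s t : S) : set G :=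
  [set g | act g s = t].

Definition proper_action d (G : topMeasurableType d) (R : realType) (S : Type)
    (lam : {measure set G -> \bar R}) (act : G -> S -> S) : Prop :=
  exists B : nat -> set S,
    [/\ trivIset [set: nat] B, \bigcup_n B n = [set: S] &
        forall s n, (lam [set g | B n (act g s)] < +oo)%E].

Definition act_orbit (G S : Type) (act : G -> S -> S) (s : S) : set S :=
  [set act g s | g in [set: G]].

Definition orbit_repr (G S : Type) (act : G -> S -> S) (beta : S -> S) : Prop :=
  (forall s, exists g, act g (beta s) = s) /\
  (forall g s, beta (act g s) = beta s).

(* Main.v *)
Require Import Defs.
From HB Require Import structures.
From mathcomp Require Import all_boot all_order all_algebra.
From mathcomp Require Import finmap.
From mathcomp Require Import all_classical all_reals all_analysis.
From mathcomp Require Import lebesgue_measure measurable_realfun lebesgue_integral.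
Import Order.TTheory GRing.Theory Num.Theory.
Local Open Scope classical_set_scope.
Local Open Scope ring_scope.

Lemma sect_meas d (G : topMeasurableType d) (S : Type) (C : set (G*S)) (s : S) :
 prod_powerset_measurable C -> measurable [set g | C (g, s)].
Proof.
move=> HC.
apply: (@smallest_sub _ (sigma_algebra [set: G*S]) _
   [set C | measurable [set g | C (g,s)]] _ _ C HC).
  split.
  - by rewrite /= (_ : [set g | set0 (g, s)] = set0).
  - move=> A /= mA; rewrite (_ : [set g | (setT `\` A) (g, s)] = ~` [set g | A (g, s)]).
      exact: measurableC.
    by apply/seteqP; split=> x /=; [case|split].
  - move=> F mF /=; rewrite (_ : [set g | (\bigcup_k F k) (g, s)] = \bigcup_k [set g | F k (g, s)]).
      exact: bigcupT_measurable.
    by apply/seteqP; split=> x /=.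
move=> _ [A mA [B _ <-]] /=.
have [Bs|Bs] := pselect (B s).
  by rewrite (_ : [set g | (A `*` B) (g, s)] = A) //; apply/seteqP; split=> x /=; [case|].
rewrite (_ : [set g | (A `*` B) (g, s)] = set0) //; apply/seteqP; split=> x //=; by case.
Qed.

Local Open Scope ereal_scope.
Lemma decomp d (G : topMeasurableType d) (R : realType) (lam : {measure set G -> \bar R})
  (S : countType) (act : G -> S -> S) (P : set G) (s : S) (c : \bar R) :
 (forall t, measurable (P `&` Gst act s t)) ->
 (forall t, (exists2 h, P h & act h s = t) -> lam (P `&` Gst act s t) = c) ->
 lam P = \esum_(t in [set act h s | h in P]) c.
Proof.
move=> mP Pc.
pose F : nat -> set G := fun n => if pickle_inv n is Some t then P `&` Gst act s t else set0.
have mF : forall n, measurable (F n) by move=> n; rewrite /F; case: pickle_inv.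
have tF : trivIset setT F.
  move=> n m _ _ [x []]; rewrite /F.
  case En: (pickle_inv n) => [t|] //; case Em: (pickle_inv m) => [t'|] // [_ ht] [_ ht'].
  have Kn := @pickle_invK S n; have Km := @pickle_invK S m.
  by rewrite En /= in Kn; rewrite Em /= in Km; rewrite -Kn -Km -ht -ht'.
have PF : P = \bigcup_(n in setT) F n.
  apply/seteqP; split=> [x Px|x [n _]].
    by exists (choice.pickle (act x s)) => //; rewrite /F pickleK_inv.
  by rewrite /F; case: pickle_inv => // t [].
have F0 : forall n, ~ range (@choice.pickle S) n -> F n = set0.
  move=> n nr; rewrite /F; case En: (pickle_inv n) => [t|] //.
  have Kn := @pickle_invK S n; rewrite En /= in Kn.
  by exfalso; apply: nr; exists t.
rewrite {1}PF measure_bigcup // nneseries_esum // (_ : [set x | x \in setT] = setT); last by apply/seteqP; split => x; rewrite /= ?inE.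
rewrite [LHS](_ : _ = \esum_(n in range (@choice.pickle S)) lam (F n)); last first.
  rewrite [RHS]esum_mkcond; apply: eq_esum => n _.
  case: ifPn => // /negP nr; rewrite F0 ?measure0 // => r; apply: nr; by rewrite inE.
rewrite esum_image; last by move=> x y _ _; apply: (pcan_inj (@pickleK_inv S)).
rewrite [RHS]esum_mkcond; apply: eq_esum => t _; rewrite /F pickleK_inv; case: ifPn.
  rewrite inE => -[h Ph <-]; apply: Pc; by exists h.
move=> /negP nA; rewrite (_ : _ `&` _ = set0) ?measure0 //.
by apply/seteqP; split=> x // [Px hx]; apply: nA; rewrite inE; exists x.
Qed.

Lemma sum_cst_seq (R : realType) (T : Type) (s : seq T) (r : R) : (\sum_(i <- s) r = r *+ size s)%R.
Proof. by rewrite big_const_seq count_predT iter_addr addr0. Qed.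

Lemma esum_cst_fin (R : realType) (T : choiceType) (A : set T) (r : R) :
  finite_set A -> (0 <= r)%R -> \esum_(t in A) r%:E = (r *+ #|`fset_set A|)%:E.
Proof.
move=> fA r0; rewrite esum_fset //.
by rewrite fsbig_finite // sumEFin sum_cst_seq.
Qed.

Lemma esum_cst_ge (R : realType) (T : choiceType) (A : set T) (B : {fset T}) (r : R) :
  [set` B] `<=` A -> (0 <= r)%R -> (r *+ #|` B|)%:E <= \esum_(t in A) r%:E.
Proof.
move=> BA r0; apply: ereal_sup_ubound; exists [set` B]; first by split => //; exact: finite_fset.
by rewrite fsbig_finite // set_fsetK sumEFin sum_cst_seq.
Qed.

Lemma esum_cst_finite (R : realType) (T : choiceType) (A : set T) (r : R) :
  (0 < r)%R -> \esum_(t in A) r%:E < +oo -> finite_set A.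
Proof.
move=> r0 lt; apply: contrapT => infA.
have ge0 : 0 <= \esum_(t in A) r%:E by apply: esum_ge0 => *; rewrite lee_fin ltW.
have fe : \esum_(t in A) r%:E \is a fin_num by rewrite ge0_fin_numE.
set e := fine (\esum_(t in A) r%:E).
have e0 : (0 <= e)%R by rewrite fine_ge0.
have [B BA nB] := infinite_set_fset (Num.bound (e / r)) infA.
have := @esum_cst_ge R T A B r BA (ltW r0); rewrite -(fineK fe) -/e lee_fin => H.
have : (e < r *+ #|` B|)%R.
  rewrite -mulr_natr; apply: (lt_le_trans _ (ler_wpM2l (ltW r0) (_ : (Num.bound (e/r))%:R <= #|` B|%:R)%R)); last by rewrite ler_nat.
  rewrite -ltr_pdivrMl // mulrC archi_boundP // divr_ge0 // ltW //.
by rewrite ltNge H.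
Qed.

Local Close Scope ereal_scope.

Theorem lemma2p7 (d : measure_display) (G : topMeasurableType d) (R : realType)
  (mul : G -> G -> G) (inv : G -> G) (one : G)
  (lam : {measure set G -> \bar R}) (Delta : G -> R)
  (S : countType) (act : G -> S -> S) (beta : S -> S) :
  is_borel G ->
  is_lcsc_group mul inv one ->
  is_left_Haar mul lam ->
  is_modular_function mul inv lam Delta ->
  is_action mul one act ->
  measurable_action act ->
  orbit_repr act beta ->
  (proper_action lam act <->
     (forall s, (0 < lam (Gst act s s))%E /\ (lam (Gst act s s) < +oo)%E))
  /\
  (proper_action lam act ->
     (forall (s : S) (g : G), act g (beta s) = s ->
        let A := [set act h (beta s) | h in Gst act s s] in
        let B := [set act h s | h in Gst act (beta s) (beta s)] in
        [/\ Delta (inv g) = fine (lam (Gst act s s)) /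
                            fine (lam (Gst act (beta s) (beta s))),
            finite_set A, finite_set B &
            Delta (inv g) = (#|` fset_set A|%:R / #|` fset_set B|%:R)])
     /\
     ((forall s, finite_set (act_orbit act s)) \/
      (forall s, infinite_set (act_orbit act s)))).
Proof.
move=> _ [assoc [mul1 [mulV _]]] [Hinv _ Hpos] HDelta [act1 actM] Hmeas _.
have mulKg : forall a x, mul (inv a) (mul a x) = x.
  by move=> a x; rewrite assoc (proj1 (mulV a)) (proj1 (mul1 x)).
have mulKVg : forall a x, mul a (mul (inv a) x) = x.
  by move=> a x; rewrite assoc (proj2 (mulV a)) (proj1 (mul1 x)).
have actK : forall g s, act (inv g) (act g s) = s.
  by move=> g s; rewrite -actM (proj1 (mulV g)) act1.
have mpre : forall (C : set S) s, measurable [set g | C (act g s)].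
  by move=> C s; exact: (@sect_meas _ _ _ _ s (Hmeas C)).
have mG : forall s t, measurable (Gst act s t).
  by move=> s t; exact: (mpre [set t] s).
have stabM : forall u a b, Gst act u u a -> Gst act u u b -> Gst act u u (mul a b).
  by rewrite /Gst /= => u a b ha hb; rewrite actM hb ha.
have stabV : forall u a, Gst act u u a -> Gst act u u (inv a).
  by rewrite /Gst /= => u a ha; rewrite -{1}ha actK.
have coset : forall (P : set G) s t h0, measurable P ->
    (forall a b, P a -> P b -> P (mul a b)) -> (forall a, P a -> P (inv a)) ->
    P h0 -> act h0 s = t -> lam (P `&` Gst act s t) = lam (P `&` Gst act s s).
  move=> P s t h0 mP PM PV Ph0 h0t.
  rewrite (_ : P `&` Gst act s t = [set mul h0 x | x in P `&` Gst act s s]); last first.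
    apply/seteqP; split => [y [Py yt]|_ [x [Px xs] <-]].
      exists (mul (inv h0) y); last exact: mulKVg.
      split; first exact: PM (PV _ Ph0) Py.
      by move: yt; rewrite /Gst /= actM => ->; rewrite -h0t actK.
    split; first exact: PM.
    by move: xs; rewrite /Gst /= actM => ->.
  by apply: Hinv; apply: measurableI.
have count : forall (P : set G) s, measurable P ->
    (forall a b, P a -> P b -> P (mul a b)) -> (forall a, P a -> P (inv a)) ->
    lam P = \esum_(t in [set act h s | h in P]) lam (P `&` Gst act s s).
  move=> P s mP PM PV; apply: (@decomp _ _ _ lam _ act P s).
    by move=> t; apply: measurableI.
  by move=> t [h Ph ht]; exact: (coset P s t h mP PM PV Ph ht).
have lamT : (0 < lam setT)%E by apply: Hpos; [exact: openT | exists one].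
have LT : forall s, lam setT = \esum_(t in act_orbit act s) lam (Gst act s s).
  move=> s; rewrite -[Gst act s s]setTI.
  exact: (count setT s measurableT (fun _ _ _ _ => I) (fun _ _ => I)).
have Lpos : forall s, (0 < lam (Gst act s s))%E.
  move=> s; rewrite lt_neqAle measure_ge0 andbT eq_sym; apply/negP => /eqP L0.
  by move: lamT; rewrite (LT s) L0 esum1 // ltxx.
have iff : proper_action lam act <->
     (forall s, (0 < lam (Gst act s s))%E /\ (lam (Gst act s s) < +oo)%E).
  split.
  - move=> [B [tB cB fB]] s; split; first exact: Lpos.
    have : (\bigcup_n B n) s by rewrite cB.
    case=> n _ Bns; apply: le_lt_trans (fB s n).
    apply: le_measure; rewrite ?inE; [exact: mG | exact: mpre |].
    by move=> g; rewrite /Gst /= => ->.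
  - move=> HL; exists (fun n => [set x | choice.pickle x = n]); split.
    + by move=> n m _ _ [x [/= hn hm]]; rewrite -hn -hm.
    + by apply/seteqP; split=> // x _; exists (choice.pickle x).
    + move=> s n.
      have [[h0 h0n]|none] := pselect (exists h, choice.pickle (act h s) = n).
        have -> : [set g | [set x | choice.pickle x = n] (act g s)] =
                  setT `&` Gst act s (act h0 s).
          apply/seteqP; split=> g /=.
            move=> gn; split=> //; rewrite /Gst /=.
            by apply: (pcan_inj (@pickleK_inv S)); rewrite gn h0n.
          by move=> [_]; rewrite /Gst /= => ->.
        rewrite (coset setT s _ h0 measurableT (fun _ _ _ _ => I) (fun _ _ => I) I erefl) setTI.
        exact: (HL s).2.
      have -> : [set g | [set x | choice.pickle x = n] (act g s)] = set0.
        by apply/seteqP; split=> g //= gn; apply: none; exists g.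
      by rewrite measure0.
split; first exact: iff.
move=> /iff HL.
have Lr : forall s, exists2 r, (0 < r)%R & lam (Gst act s s) = r%:E.
  move=> s; exists (fine (lam (Gst act s s))); last by rewrite fineK // ge0_fin_numE // (HL s).2.
  by rewrite -lte_fin fineK ?(Lpos s) // ge0_fin_numE // (HL s).2.
split; last first.
  have [Tfin|Tinf] := pselect (lam setT < +oo)%E.
    left=> s; have [r r0 Ls] := Lr s.
    by apply: (@esum_cst_finite R S _ r r0); rewrite -Ls -LT.
  right=> s fO; apply: Tinf; have [r r0 Ls] := Lr s.
  by rewrite (LT s) Ls esum_cst_fin ?ltry // ltW.
move=> s g hg A B.
pose K := Gst act s s `&` Gst act (beta s) (beta s).
have mK : measurable K by apply: measurableI.
have LA : lam (Gst act s s) = \esum_(t in A) lam K.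
  exact: (count (Gst act s s) (beta s) (mG s s) (stabM s) (stabV s)).
have LB : lam (Gst act (beta s) (beta s)) = \esum_(t in B) lam K.
  rewrite /K setIC.
  exact: (count (Gst act (beta s) (beta s)) s (mG _ _) (stabM _) (stabV _)).
have Kfin : (lam K < +oo)%E.
  apply: le_lt_trans (HL s).2; apply: le_measure; rewrite ?inE //; exact: subIsetl.
have K0 : lam K != 0%E.
  by apply/eqP => K0; have := Lpos s; rewrite LA K0 esum1 // ltxx.
have Kk : lam K = (fine (lam K))%:E by rewrite fineK // ge0_fin_numE.
set k := fine (lam K) in Kk.
have k0 : (0 < k)%R by rewrite -lte_fin -Kk lt_neqAle eq_sym K0 measure_ge0.
rewrite Kk in LA LB.
have fA : finite_set A by apply: (@esum_cst_finite R S _ k k0); rewrite -LA (HL s).2.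
have fB : finite_set B by apply: (@esum_cst_finite R S _ k k0); rewrite -LB (HL (beta s)).2.
rewrite esum_cst_fin ?ltW // in LA; rewrite esum_cst_fin ?ltW // in LB.
have LM : lam (Gst act s s) = ((Delta (inv g))%:E * lam (Gst act (beta s) (beta s)))%E.
  have mf : measurable_fun setT (fun x => (\1_(Gst act (beta s) (beta s)) x : R)%:E).
    by apply/measurable_EFinP; apply: measurable_indic.
  have nn : forall x, (0 <= (\1_(Gst act (beta s) (beta s)) x : R)%:E)%E.
    by move=> x; rewrite lee_fin indicE ler0n.
  have := HDelta g _ mf nn.
  have E : (fun x : G => Gst act (beta s) (beta s) (mul x g)) = Gst act s (beta s).
    by apply/funext => x; rewrite /Gst /= actM hg.
  rewrite integral_indic //; last by rewrite E.
  rewrite E setIT.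
  rewrite integral_indic // setIT => <-.
  rewrite (_ : Gst act s (beta s) = [set mul (inv g) x | x in Gst act s s]).
    by rewrite Hinv.
  apply/seteqP; split => [y ys|_ [x xs <-]].
    exists (mul g y); last exact: mulKg.
    by move: ys; rewrite /Gst /= actM => ->.
  by move: xs; rewrite /Gst /= => xs; rewrite actM xs -{1}hg actK.
rewrite LA LB in LM.
have nB0 : (#|` fset_set B| != 0)%N.
  apply/eqP => nB0; have := Lpos (beta s); by rewrite LB nB0 mulr0n ltxx.
move: LM => [] LM.
have kB : (k *+ #|` fset_set B| != 0)%R.
  rewrite -mulr_natr mulf_neq0 //. by rewrite gt_eqF. by rewrite pnatr_eq0.
have HD : Delta (inv g) = (k *+ #|` fset_set A|) / (k *+ #|` fset_set B|).
  by rewrite LM mulfK.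
split => //.
  by rewrite LA LB /=.
rewrite HD -(mulr_natr k #|` fset_set A|) -(mulr_natr k #|` fset_set B|).
by rewrite invfM mulrACA mulfV ?(gt_eqF k0) // mul1r.
Qed.
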